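(* Let $l:\mathbb{R}\to\mathbb{R}$ be continuous and $l_o(x):=\frac12(l(x)-l(-x))$. Then there exist $c_1,d_1,d_2\in\mathbb{R}$ such that $$\limsup_{x\to+\infty}\big(l_o(x)-c_1x-d_1\big)=0\quad\text{and}\quad\limsup_{x\to-\infty}\big(l_o(x)-c_1x-d_2\big)=0$$ if and only if there exist $q,q'\in\mathbb{R}$ such that $l_o(x)\le q'x+q$ for every $x\in\mathbb{R}$. *)

(* Defs.v *)
From HB Require Import structures.
From mathcomp Require Import all_boot all_order all_algebra.
From mathcomp Require Import all_classical all_reals all_analysis.
Set Implicit Arguments. Unset Strict Implicit. Unset Printing Implicit Defensive.
Import Order.TTheory GRing.Theory Num.Theory.
Import numFieldNormedType.Exports.
Local Open Scope ring_scope.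

Definition odd_part (R : realType) (l : R -> R) : R -> R :=
  fun x => (l x - l (- x)) / 2.

(* Main.v *)
Require Import Defs.
From mathcomp Require Import lra.
From HB Require Import structures.
From mathcomp Require Import all_boot all_order all_algebra.
From mathcomp Require Import all_classical all_reals all_analysis.
Import Order.TTheory GRing.Theory Num.Theory.
Import numFieldNormedType.Exports.
Local Open Scope classical_set_scope.
Local Open Scope ring_scope.
Section shift.
Variable R : realType.
Local Open Scope ereal_scope.

Lemma sup_shift (S : set (\bar R)) (a : R) :
  ereal_sup ((fun y => y + a%:E) @` S) <= ereal_sup S + a%:E.
Proof. apply: ge_ereal_sup => _ [y Sy <-]; apply: leeD2r; exact: ereal_sup_ubound. Qed.

Lemma shift_back (S : set (\bar R)) (a : R) :
  (fun y => y + (- a)%:E) @` ((fun y => y + a%:E) @` S) = S.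
Proof.
rewrite image_comp.
have -> : ((fun y => y + (- a)%:E) \o (fun y => y + a%:E)) = id.
  by apply: funext => y /=; rewrite EFinN addeK.
by rewrite image_id.
Qed.

Lemma sup_shiftE (S : set (\bar R)) (a : R) :
  ereal_sup ((fun y => y + a%:E) @` S) = ereal_sup S + a%:E.
Proof.
apply/le_anti; rewrite sup_shift /=.
have := sup_shift ((fun y => y + a%:E) @` S) (- a).
rewrite shift_back => h.
by rewrite -(subeK (ereal_sup ((fun y => y + a%:E) @` S)) (fin_numE a%:E)) -EFinN leeD2r.
Qed.

Lemma inf_shift (S : set (\bar R)) (a : R) :
  ereal_inf S + a%:E <= ereal_inf ((fun y => y + a%:E) @` S).
Proof. apply: le_ereal_inf_tmp => _ [y Sy <-]; apply: leeD2r; exact: ereal_inf_lbound. Qed.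

Lemma inf_shiftE (S : set (\bar R)) (a : R) :
  ereal_inf ((fun y => y + a%:E) @` S) = ereal_inf S + a%:E.
Proof.
apply/le_anti; rewrite inf_shift andbT.
have := inf_shift ((fun y => y + a%:E) @` S) (- a).
rewrite shift_back => h.
by rewrite -(subeK (ereal_inf ((fun y => y + a%:E) @` S)) (fin_numE a%:E)) -EFinN leeD2r.
Qed.

Lemma limf_esup_shift (f : R -> \bar R) (F : set_system R) (a : R) :
  limf_esup (fun x => f x + a%:E) F = limf_esup f F + a%:E.
Proof.
rewrite !limf_esupE -inf_shiftE; congr ereal_inf.
apply/seteqP; split.
- move=> _ [V FV <-].
  by exists (ereal_sup (f @` V)); [exists V | rewrite -sup_shiftE image_comp].
- move=> _ [_ [V FV <-] <-].
  by exists V => //; rewrite -sup_shiftE image_comp.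
Qed.
End shift.

Lemma odd_partN (R : realType) (l : R -> R) x : odd_part l (- x) = - odd_part l x.
Proof. by rewrite /odd_part opprK -mulNr opprB. Qed.

Lemma bounded_shift (R : realType) (g : R -> R) (F : set_system R) (FF : ProperFilter F)
  (q : R) : (forall x, - q <= g x <= q) ->
  exists d, limf_esup (fun x => (g x - d)%:E) F = 0%E.
Proof.
move=> hg.
set L := limf_esup (fun x => (g x)%:E) F.
have Lup : (L <= q%:E)%E.
  rewrite /L limf_esupE.
  apply: (@le_trans _ _ (ereal_sup ((fun x => (g x)%:E) @` setT))).
    by apply: ereal_inf_lbound; exists setT => //; exact: filterT.
  apply: ge_ereal_sup => _ [x _ <-]; rewrite lee_fin; by case/andP: (hg x).
have Llo : ((- q)%:E <= L)%E.
  rewrite /L limf_esupE; apply: le_ereal_inf_tmp => _ [V FV <-].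
  have [x Vx] := filter_ex FV.
  apply: (@le_trans _ _ (g x)%:E); first by rewrite lee_fin; case/andP: (hg x).
  by apply: ereal_sup_ubound; exists x.
have Lfin : L \is a fin_num.
  apply: (@ltgte_fin_num _ _ ((- q - 1)%:E) ((q + 1)%:E)).
  apply/andP; split.
    by apply: lt_le_trans Llo; rewrite lte_fin; lra.
  by apply: le_lt_trans Lup _; rewrite lte_fin; lra.
exists (fine L).
have -> : (fun x => (g x - fine L)%:E) = (fun x => (g x)%:E + (- fine L)%:E)%E.
  by apply: funext => x; rewrite EFinB EFinN.
by rewrite limf_esup_shift -/L EFinN fineK // subee.
Qed.

Lemma limsup0_bound (R : realType) (h : R -> R) (F : set_system R) :
  limf_esup (fun x => (h x)%:E) F = 0%E -> exists V, F V /\ forall x, V x -> h x <= 1.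
Proof.
rewrite limf_esupE => H.
have : (ereal_inf [set ereal_sup ((fun x => (h x)%:E) @` V) | V in F] < 1%:E)%E.
  by rewrite H lte01.
case/ereal_inf_lt => _ [V FV <-] lt; exists V; split => // x Vx.
rewrite -lee_fin; apply: le_trans (ltW lt).
by apply: ereal_sup_ubound; exists x.
Qed.

Theorem lemma19 (R : realType) (l : R -> R) (hl : continuous l) :
  (exists c1 d1 d2 : R,
      limf_esup (fun x : R => ((odd_part l x - c1 * x - d1)%:E)) (+oo%R : set_system R) = 0%E /\
      limf_esup (fun x : R => ((odd_part l x - c1 * x - d2)%:E)) (-oo%R : set_system R) = 0%E)
  <->
  (exists q q' : R, forall x : R, odd_part l x <= q' * x + q).
Proof.
split.
- move=> [c1 [d1 [d2 [h1 h2]]]].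
  set g := fun x => odd_part l x - c1 * x.
  have [V1 [[M1 [_ HM1]] HV1]] := @limsup0_bound R _ _ h1.
  have [V2 [[M2 [_ HM2]] HV2]] := @limsup0_bound R _ _ h2.
  have cg : continuous g.
    move=> x; rewrite /g /odd_part.
    apply: cvgB; last by apply: cvgMr; exact: cvg_id.
    apply: cvgMl; apply: cvgB; first exact: hl.
    by apply: continuous_comp; [exact: oppr_continuous | exact: hl].
  set N := `|M1| + `|M2|.
  have N0 : - N <= N by rewrite /N; have := normr_ge0 M1; have := normr_ge0 M2; lra.
  have [c _ Hc] := @EVT_max R g (- N) N N0 (continuous_subspaceT cg).
  exists (Num.max (Num.max d1 d2 + 1) (g c)), c1 => x.
  have m1 : Num.max d1 d2 + 1 <= Num.max (Num.max d1 d2 + 1) (g c) by rewrite le_max lexx.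
  have m2 : g c <= Num.max (Num.max d1 d2 + 1) (g c) by rewrite le_max lexx orbT.
  have e1 : d1 <= Num.max d1 d2 by rewrite le_max lexx.
  have e2 : d2 <= Num.max d1 d2 by rewrite le_max lexx orbT.
  have gx : g x = odd_part l x - c1 * x by [].
  have n1 := ler_norm M1; have n2 := ler_norm M2.
  have n1' : - M2 <= `|M2| by rewrite -normrN ler_norm.
  have a1 := normr_ge0 M1; have a2 := normr_ge0 M2.
  have [xN|xN] := ltP N x.
    have hx : M1 < x by rewrite /N in xN; lra.
    have := HV1 x (HM1 x hx); lra.
  have [xN'|xN'] := ltP x (- N).
    have hx : x < M2 by rewrite /N in xN'; lra.
    have := HV2 x (HM2 x hx); lra.
  have hx : x \in `[- N, N] by rewrite in_itv /= xN xN'.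
  have := Hc x hx; lra.
- move=> [q [q' hq]].
  set g := fun x => odd_part l x - q' * x.
  have hg : forall x, - q <= g x <= q.
    move=> x; rewrite /g; have := hq x; have := hq (- x); rewrite odd_partN => a b.
    apply/andP; split; nra.
  have [d1 H1] := @bounded_shift R g _ proper_pinfty_nbhs q hg.
  have [d2 H2] := @bounded_shift R g _ proper_ninfty_nbhs q hg.
  by exists q', d1, d2.
Qed.
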